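(* For every integer $n\ge 1$, $\mathbf{w}(\omega^{\times n})=\omega^{n-1}$.
   Context: $\omega^{\times n}=\omega\times\dots\times\omega$ ($n$ factors) is the cartesian product of $n$ copies of the ordinal $\omega$ with the componentwise order. The width $\mathbf{w}(A)$ of a wqo $A$ is the rank of the forest of nonempty finite sequences of pairwise incomparable elements of $A$ ordered by initial segment, i.e. $\mathbf{w}(A)=\sup_s(r(s)+1)$ with $r(s)=\sup\{r(t)+1: t$ child of $s\}$. *)

(* Defs.v *)
From mathcomp Require Import all_boot.
Set Implicit Arguments. Unset Strict Implicit. Unset Printing Implicit Defensive.

(* ---------- Ordinals below omega^omega in Cantor normal form ----------
   A list [c_0; c_1; ...; c_k] of naturals denotes the ordinal
   omega^k * c_k + ... + omega * c_1 + c_0.  It is canonical when its last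
   coefficient is nonzero (the empty list is the ordinal 0). *)
Definition ocanon (s : seq nat) : bool := last 1 s != 0.

Fixpoint lexlt (a b : seq nat) : bool :=
  match a, b with
  | x :: a', y :: b' => (x < y) || ((x == y) && lexlt a' b')
  | _, _ => false
  end.

(* strict ordinal order on canonical forms: compare leading exponent
   (= size), then coefficients from the highest one down *)
Definition olt (s t : seq nat) : bool :=
  (size s < size t) || ((size s == size t) && lexlt (rev s) (rev t)).
Definition ole (s t : seq nat) : bool := (s == t) || olt s t.

Definition osucc (s : seq nat) : seq nat :=
  match s with [::] => [:: 1] | c :: s' => c.+1 :: s' end.

Definition opow_omega (k : nat) : seq nat := rcons (nseq k 0) 1.

Definition oub (P : seq nat -> Prop) (x : seq nat) : Prop :=
  forall y, P y -> ole y x.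
Definition ois_sup (P : seq nat -> Prop) (x : seq nat) : Prop :=
  [/\ ocanon x, oub P x & forall y, ocanon y -> oub P y -> ole x y].

(* ---------- the wqo omega^{x n} with componentwise order ---------- *)
Definition prodw (n : nat) := 'I_n -> nat.
Definition prodw_le n (x y : prodw n) : bool := [forall i, x i <= y i].
Definition incomp n (x y : prodw n) : bool :=
  ~~ prodw_le x y && ~~ prodw_le y x.

(* nodes of the forest: nonempty finite sequences of pairwise incomparable
   elements; ordered by initial segment *)
Definition antichain_node n (s : seq (prodw n)) : Prop :=
  s <> [::] /\ pairwise (@incomp n) s.
Definition forest_child n (s t : seq (prodw n)) : Prop :=
  exists a, t = rcons s a.

Definition is_rank_fun n (r : seq (prodw n) -> seq nat) : Prop :=
  forall s, antichain_node s ->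
    ois_sup (fun o => exists t, [/\ antichain_node t, forest_child s t &
                                     o = osucc (r t)]) (r s).

(* w(omega^{x n}) = alpha, alpha < omega^omega: the rank of the forest
   (sup_s (r(s)+1)) equals alpha *)
Definition width_is n (alpha : seq nat) : Prop :=
  exists r : seq (prodw n) -> seq nat, is_rank_fun r /\
    ois_sup (fun o => exists s, antichain_node s /\ o = osucc (r s)) alpha.

(* Main.v *)
Require Import Defs.
From mathcomp Require Import all_boot.
From mathcomp Require Import zify.
From Stdlib Require Import Classical.
Set Implicit Arguments. Unset Strict Implicit. Unset Printing Implicit Defensive.

Definition lele (u v : seq nat) : bool := (u == v) || lexlt u v.

Lemma lexlt_irr u : lexlt u u = false.
Proof. by elim: u => [|x u IH] //=; rewrite ltnn eqxx IH. Qed.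

Lemma lexlt_trans u v w : lexlt u v -> lexlt v w -> lexlt u w.
Proof.
elim: u v w => [|x u IH] [|y v] [|z w] //=.
case/orP=> [xy|/andP[/eqP-> uv]]; case/orP=> [yz|/andP[/eqP<- vw]].
- by rewrite (ltn_trans xy yz).
- by rewrite xy.
- by rewrite yz.
- by rewrite eqxx (IH _ _ uv vw) orbT.
Qed.

Lemma lexlt_total u v : size u = size v -> [|| lexlt u v, u == v | lexlt v u].
Proof.
elim: u v => [|x u IH] [|y v] //= [/IH] H.
case: (ltngtP x y) => xy; rewrite /= ?xy //.
  by rewrite orbT.
rewrite eqseq_cons eqxx /=.
by case/or3P: H => ->; rewrite ?orbT.
Qed.

Lemma lexlt_asym u v : lexlt u v -> lexlt v u = false.
Proof. by move=> uv; apply/negP=> vu; have := lexlt_trans uv vu; rewrite lexlt_irr. Qed.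

Lemma lele_cons x y u v : lele (x :: u) (y :: v) = (x < y) || ((x == y) && lele u v).
Proof.
rewrite /lele /= eqseq_cons; case: (ltngtP x y) => //= _.
Qed.

Lemma lele_lt_trans u v w : lele u v -> lexlt v w -> lexlt u w.
Proof. by case/orP=> [/eqP->//|]; apply: lexlt_trans. Qed.

Lemma lt_lele_trans u v w : lexlt u v -> lele v w -> lexlt u w.
Proof. by move=> uv /orP[/eqP<-//|]; apply: lexlt_trans. Qed.

Lemma lele_trans u v w : lele u v -> lele v w -> lele u w.
Proof.
case/orP=> [/eqP->//|uv] vw; by rewrite /lele (lt_lele_trans uv vw) orbT.
Qed.

Lemma lele_refl u : lele u u.
Proof. by rewrite /lele eqxx. Qed.

Lemma lexlt_lele u v : lexlt u v -> lele u v.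
Proof. by rewrite /lele => ->; rewrite orbT. Qed.

Lemma not_lt_lele u v : size u = size v -> ~~ lexlt v u -> lele u v.
Proof.
by move=> s; case/or3P: (lexlt_total s) => [uv|/eqP->|->] //; rewrite ?lele_refl ?lexlt_lele.
Qed.

Lemma lele_not_lt u v : lele u v -> ~~ lexlt v u.
Proof.
case/orP=> [/eqP->|uv]; first by rewrite lexlt_irr.
by rewrite lexlt_asym.
Qed.

Fixpoint add (u v : seq nat) : seq nat :=
  match u, v with x :: u', y :: v' => (x + y) :: add u' v' | _, _ => [::] end.

Lemma size_add u v : size u = size v -> size (add u v) = size u.
Proof. by elim: u v => [|x u IH] [|y v] //= [/IH ->]. Qed.

Lemma addC u v : add u v = add v u.
Proof. by elim: u v => [|x u IH] [|y v] //=; rewrite addnC IH. Qed.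

Lemma lexlt_add2r u v w : size u = size w -> size v = size w ->
  lexlt u v -> lexlt (add u w) (add v w).
Proof.
elim: u v w => [|x u IH] [|y v] [|z w] //= [su] [sv].
case/orP=> [xy|/andP[/eqP-> uv]]; first by rewrite ltn_add2r xy.
by rewrite eqxx (IH _ _ su sv uv) orbT.
Qed.

Lemma lexlt_add2l u v w : size u = size w -> size v = size w ->
  lexlt u v -> lexlt (add w u) (add w v).
Proof. by move=> su sv uv; rewrite ![add w _]addC lexlt_add2r. Qed.

Lemma lele_addr u v : size u = size v -> lele u (add u v).
Proof.
elim: u v => [|x u IH] [|y v] //= [/IH H]; rewrite lele_cons.
case: y => [|y]; last by rewrite addnS ltnS leq_addr.
by rewrite addn0 ltnn eqxx H.
Qed.

Lemma lele_addl u v : size u = size v -> lele u (add v u).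
Proof. by move=> s; rewrite addC lele_addr. Qed.

Lemma split_lt u v w : size u = size w -> size v = size w -> lexlt w (add u v) ->
  (exists u', [/\ size u' = size w, lexlt u' u & lele w (add u' v)]) \/
  (exists v', [/\ size v' = size w, lexlt v' v & lele w (add u v')]).
Proof.
elim: u v w => [|x u IH] [|y v] [|z w] //= [su] [sv].
case/orP=> [zxy|/andP[/eqP-> wuv]].
- case: x zxy => [|x] zxy.
  + case: y zxy => [|y] // zxy; right; exists (y :: w); split => //=.
      by rewrite ltnSn.
    rewrite lele_cons add0n; move: zxy; rewrite add0n ltnS leq_eqVlt => /orP[/eqP->|->] //.
    by rewrite ltnn eqxx /= (lele_addl (esym su)).
  + left; exists (x :: w); split => //=; first by rewrite ltnSn.
    rewrite lele_cons; move: zxy; rewrite addSn ltnS leq_eqVlt => /orP[/eqP->|->] //.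
    by rewrite ltnn eqxx /= (lele_addr (esym sv)).
- case: (IH _ _ su sv wuv) => [[u' [s1 l1 l2]]|[v' [s1 l1 l2]]].
  + left; exists (x :: u'); split.
    * by rewrite /= s1.
    * by rewrite /= eqxx l1 orbT.
    * by rewrite lele_cons eqxx l2 orbT.
  + right; exists (y :: v'); split.
    * by rewrite /= s1.
    * by rewrite /= eqxx l1 orbT.
    * by rewrite lele_cons eqxx l2 orbT.
Qed.

Lemma lex_acc k u : size u = k ->
  Acc (fun a b => size a = k /\ lexlt a b) u.
Proof.
elim: k u => [|k IHk] u.
  move/size0nil->; constructor=> a [_] H; exfalso. case: a H => [|? ?] H; discriminate.
case: u => [|x u]; first discriminate.
move=> [su].
have Hu := IHk u su.
elim/ltn_ind: x u su Hu => x IHx u su Hu.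
elim: Hu su => {}u _ IHu su.
constructor=> a [sa].
case: a sa => [|y a] sa H; first discriminate.
case/orP: H => [yx|/andP[/eqP yx au]].
  apply: IHx; [exact: yx| by case: sa | apply: IHk; by case: sa].
rewrite yx; apply: IHu => //; by case: sa.
Qed.

Lemma lex_min k (P : seq nat -> Prop) : (exists u, size u = k /\ P u) ->
  exists m, [/\ size m = k, P m & forall v, size v = k -> P v -> lele m v].
Proof.
case=> u [su Pu]; have A := lex_acc su; move: A su Pu.
elim=> {}u _ IH; move=> su Pu.
case: (classic (exists v, [/\ size v = k, lexlt v u & P v])).
  by case=> v [sv vu Pv]; apply: (IH v).
move=> Hn; exists u; split=> // v sv Pv.
apply: not_lt_lele; first by rewrite su sv.
by apply/negP=> vu; apply: Hn; exists v.
Qed.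
Fixpoint dropz (u : seq nat) : seq nat :=
  match u with 0 :: u' => dropz u' | _ => u end.
Definition cv u := rev (dropz u).

Lemma last_rev_head (x : nat) l : last x (rev l) = head x l.
Proof. by case: l => [|y l] //=; rewrite rev_cons last_rcons. Qed.

Lemma head_dropz u : head 1 (dropz u) != 0.
Proof. by elim: u => [|[|x] u IH]. Qed.

Lemma cv_canon u : ocanon (cv u).
Proof. by rewrite /ocanon /cv last_rev_head head_dropz. Qed.

Lemma size_dropz u : size (dropz u) <= size u.
Proof. by elim: u => [|[|x] u IH] //=; apply: leq_trans IH _. Qed.

Lemma size_cv u : size (cv u) <= size u.
Proof. by rewrite /cv size_rev size_dropz. Qed.

Lemma cv_cons0 u : cv (0 :: u) = cv u.
Proof. by []. Qed.

Lemma cv_consS x u : x != 0 -> cv (x :: u) = rev (x :: u).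
Proof. by case: x. Qed.

Lemma olt_cv u v : size u = size v -> olt (cv u) (cv v) = lexlt u v.
Proof.
elim: u v => [|x u IH] [|y v] //= [suv].
case: x => [|x]; case: y => [|y].
- by rewrite !cv_cons0 IH.
- rewrite cv_cons0 cv_consS //= /olt size_rev /=.
  by have := size_cv u; rewrite suv -ltnS => ->.
- rewrite cv_cons0 cv_consS //= /olt size_rev /=.
  have := size_cv v; rewrite -suv => H.
  rewrite ltnNge (leq_trans H (leqnSn _)) /=.
  by case: eqP => // e; move: H; rewrite -e ltnn.
- by rewrite !cv_consS //= /olt !size_rev /= suv ltnn eqxx /= !revK.
Qed.

Lemma olt_irr s : olt s s = false.
Proof. by rewrite /olt ltnn lexlt_irr andbF. Qed.

Lemma ole_cv u v : size u = size v -> ole (cv u) (cv v) = lele u v.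
Proof.
move=> s; rewrite /ole /lele olt_cv //.
case: (boolP (u == v)) => [/eqP->|nuv]; first by rewrite eqxx.
case: (boolP (cv u == cv v)) => [/eqP e|]; last by [].
case/or3P: (lexlt_total s) => [H|/eqP H|H]; first by rewrite H.
  by rewrite H eqxx in nuv.
by have := olt_cv (esym s); rewrite H e olt_irr.
Qed.

Fixpoint incl (u : seq nat) : seq nat :=
  match u with
  | [::] => [::]
  | x :: u' => if u' is [::] then [:: x.+1] else x :: incl u'
  end.

Lemma size_incl u : size (incl u) = size u.
Proof. elim: u => [|x u IH] //=; case: u IH => [|y u] //= ->. by []. Qed.

Lemma lele_incl u v : size u = size v -> u != [::] -> lele (incl u) v = lexlt u v.
Proof.
elim: u v => [|x u IH] [|y v] //= [suv] _.
case: u IH suv => [|z u] IH suv.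
  case: v suv => // _; rewrite lele_cons /lele /= andbT andbF orbF.
  by rewrite orbC -leq_eqVlt.
by rewrite lele_cons IH.
Qed.

Lemma rev_incl u : u != [::] -> rev (incl u) = osucc (rev u).
Proof.
elim: u => [|x u IH] // _.
case: u IH => [|z u] IH //.
rewrite [incl _]/= rev_cons IH // [rev (x :: _)]rev_cons.
by rewrite rev_cons; case: (rev u).
Qed.

Lemma osucc_cv u : u != [::] -> osucc (cv u) = cv (incl u).
Proof.
elim: u => [|x u IH] // _.
case: u IH => [|z u] IH.
  by case: x.
case: x => [|x].
  by rewrite cv_cons0 IH.
rewrite cv_consS //= cv_consS //.
by rewrite -rev_incl.
Qed.

Lemma dropz_rev_canon y : ocanon y -> dropz (rev y) = rev y.
Proof.
rewrite /ocanon; case/lastP: y => [|y a] //.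
by rewrite last_rcons rev_rcons; case: a.
Qed.

Lemma dropz_nseq k u : dropz (nseq k 0 ++ u) = dropz u.
Proof. by elim: k. Qed.

Lemma cv_pad k y : ocanon y -> size y <= k ->
  size (nseq (k - size y) 0 ++ rev y) = k /\ cv (nseq (k - size y) 0 ++ rev y) = y.
Proof.
move=> cy sy; split; first by rewrite size_cat size_nseq size_rev subnK.
by rewrite /cv dropz_nseq dropz_rev_canon // revK.
Qed.
From Stdlib Require Import ClassicalEpsilon.

Inductive RB (X : Type) (inc : X -> X -> bool) (k : nat) :
    (X -> Prop) -> seq nat -> Prop :=
  RBi A b (f : X -> seq nat) :
    (forall a, A a -> size (f a) = k) -> (forall a, A a -> lexlt (f a) b) ->
    (forall a, A a -> RB inc k (fun x => A x /\ inc a x) (f a)) -> RB inc k A b.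

Inductive GE (X : Type) (inc : X -> X -> bool) (k : nat) :
    (X -> Prop) -> seq nat -> Prop :=
  GEi A b (f : seq nat -> X) :
    (forall g, size g = k -> lexlt g b -> A (f g)) ->
    (forall g, size g = k -> lexlt g b -> GE inc k (fun x => A x /\ inc (f g) x) g) ->
    GE inc k A b.

Lemma choice_fun (T U : Type) (u0 : U) (P : T -> Prop) (Q : T -> U -> Prop) :
  (forall t, P t -> exists u, Q t u) -> exists f : T -> U, forall t, P t -> Q t (f t).
Proof.
move=> H.
have H' : forall t, exists u, P t -> Q t u.
  move=> t; case: (classic (P t)) => [Pt|nPt].
    by case: (H t Pt) => u Qu; exists u.
  by exists u0.
exists (fun t => proj1_sig (constructive_indefinite_description _ (H' t))).
move=> t Pt; exact: (proj2_sig (constructive_indefinite_description _ (H' t)) Pt).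
Qed.

Lemma RB_intro X inc k (A : X -> Prop) b :
  (forall a, A a -> exists g, [/\ size g = k, lexlt g b &
               RB inc k (fun x => A x /\ inc a x) g]) -> RB inc k A b.
Proof.
move=> H; case: (choice_fun [::] H) => f Hf.
apply: (@RBi _ _ _ _ _ f) => a Aa; by case: (Hf a Aa).
Qed.

Lemma RB_elim X inc k (A : X -> Prop) b a : RB inc k A b -> A a ->
  exists g, [/\ size g = k, lexlt g b & RB inc k (fun x => A x /\ inc a x) g].
Proof. by case=> {}A {}b f H1 H2 H3 Aa; exists (f a); split; auto. Qed.

Lemma GE_intro X inc k (A : X -> Prop) b (x0 : X) :
  (forall g, size g = k -> lexlt g b ->
     exists a, A a /\ GE inc k (fun x => A x /\ inc a x) g) -> GE inc k A b.
Proof.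
move=> H.
have H' : forall g, (size g = k /\ lexlt g b) -> exists a, A a /\ GE inc k (fun x => A x /\ inc a x) g.
  by move=> g [sg gb]; apply: H.
case: (choice_fun x0 H') => f Hf.
apply: (@GEi _ _ _ _ _ f) => g sg gb; by case: (Hf g (conj sg gb)).
Qed.

Lemma GE_elim X inc k (A : X -> Prop) b g : GE inc k A b -> size g = k -> lexlt g b ->
  exists a, A a /\ GE inc k (fun x => A x /\ inc a x) g.
Proof. by case=> {}A {}b f H1 H2 sg gb; exists (f g); split; auto. Qed.

Lemma RB_sub X inc k (A : X -> Prop) b : RB inc k A b ->
  forall B : X -> Prop, (forall x, B x -> A x) -> RB inc k B b.
Proof.
elim=> {}A {}b f H1 H2 _ IH B BA.
apply: (@RBi _ _ _ _ _ f) => a Ba; auto.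
apply: IH; first by auto.
by move=> x [Bx ax]; split=> //; apply: BA.
Qed.

Lemma RB_le X inc k (A : X -> Prop) b d : RB inc k A b -> lele b d -> RB inc k A d.
Proof.
case=> {}A {}b f H1 H2 H3 bd; apply: (@RBi _ _ _ _ _ f) => // a Aa.
exact: lt_lele_trans (H2 a Aa) bd.
Qed.

Lemma RB_empty X inc k (A : X -> Prop) b : (forall x, ~ A x) -> RB inc k A b.
Proof. by move=> H; apply: (@RBi _ _ _ _ _ (fun _ => b)) => a /H. Qed.

Lemma RB_union X inc k (A : X -> Prop) b : RB inc k A b -> size b = k ->
  forall (B : X -> Prop) d, RB inc k B d -> size d = k ->
  RB inc k (fun x => A x \/ B x) (add b d).
Proof.
elim=> {}A {}b f H1 H2 H3 IHA sb B d HB.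
elim: HB => {}B {}d f' H1' H2' H3' IHB sd.
have HBd : RB inc k B d by apply: (@RBi _ _ _ _ _ f').
apply: RB_intro => a [Aa|Ba].
- exists (add (f a) d); split.
  + by rewrite size_add // H1 // sd.
  + by apply: lexlt_add2r; rewrite ?H1 ?sb ?sd; auto.
  + have K := RB_sub (IHA a Aa (H1 a Aa) B d HBd sd); apply: K => x [[Ax|Bx] ax]; [by left | by right].
- exists (add b (f' a)); split.
  + by rewrite size_add // sb H1'.
  + by apply: lexlt_add2l; rewrite ?H1' ?sb ?sd; auto.
  + have K := RB_sub (IHB a Ba (H1' a Ba)); apply: K => x [[Ax|Bx] ax]; [by left | by right].
Qed.

Lemma GE_RB X inc k (A : X -> Prop) b : GE inc k A b ->
  forall d, RB inc k A d -> size d = k -> ~~ lexlt d b.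
Proof.
elim=> {}A {}b f H1 _ IH d Hd sd; apply/negP=> db.
case: (RB_elim Hd (H1 d sd db)) => g [sg gd Hg].
by have := IH d sd db g Hg sg; rewrite gd.
Qed.

Lemma GE_sup X inc k (A : X -> Prop) b : GE inc k A b ->
  forall B : X -> Prop, (forall x, A x -> B x) -> GE inc k B b.
Proof.
elim=> {}A {}b f H1 _ IH B AB.
apply: (@GEi _ _ _ _ _ f) => g sg gb; first by auto.
by apply: IH => // x [Ax ax]; split=> //; apply: AB.
Qed.

Lemma GE_le X inc k (A : X -> Prop) b g : GE inc k A b -> lele g b -> GE inc k A g.
Proof.
case=> {}A {}b f H1 H2 gb; apply: (@GEi _ _ _ _ _ f) => h sh hg.
  by apply: H1 => //; exact: lt_lele_trans hg gb.
by apply: H2 => //; exact: lt_lele_trans hg gb.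
Qed.

Lemma GE_union X inc k (A : X -> Prop) b : GE inc k A b -> size b = k ->
  forall (B : X -> Prop) d, GE inc k B d -> size d = k ->
  (forall x y, A x -> B y -> inc x y && inc y x) ->
  GE inc k (fun x => A x \/ B x) (add b d).
Proof.
elim=> {}A {}b f H1 H2 IHA sb B d HB.
elim: HB => {}B {}d f' H1' H2' IHB sd indep.
apply: (@GE_intro _ _ _ _ _ (f b)) => g sg gb.
case: (split_lt (etrans sb (esym sg)) (etrans sd (esym sg)) gb)
  => [[u' [su' bu' gu']]|[v' [sv' dv' gv']]].
- rewrite sg in su'.
  exists (f u'); split; first by left; apply: H1.
  have K := IHA u' su' bu' su' B d (GEi H1' H2') sd
     (fun x y Hx Hy => indep x y (proj1 Hx) Hy).
  have K2 := GE_le K gu'.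
  apply: (GE_sup K2) => x [[Ax ax]|Bx]; split; auto.
  by case/andP: (indep _ _ (H1 u' su' bu') Bx).
- rewrite sg in sv'.
  exists (f' v'); split; first by right; apply: H1'.
  have K := IHB v' sv' dv' sv' (fun x y Hx Hy => indep x y Hx (proj1 Hy)).
  have K2 := GE_le K gv'.
  apply: (GE_sup K2) => x [Ax|[Bx ax]]; split; auto.
  by case/andP: (indep _ _ Ax (H1' v' sv' dv')).
Qed.
Definition omk (n j K : nat) : seq nat := nseq (n.-1 - j) 0 ++ K :: nseq j 0.

Lemma size_omk n j K : j < n -> size (omk n j K) = n.
Proof.
move=> jn; rewrite /omk size_cat size_nseq /= size_nseq.
by case: n jn => // n jn; rewrite /= addnS subnK // -ltnS.
Qed.

Lemma lexlt_nseq_cat p u v : lexlt (nseq p 0 ++ u) (nseq p 0 ++ v) = lexlt u v.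
Proof. by elim: p => //= p ->. Qed.

Lemma lexlt_Z g k : lexlt g (nseq k 0) = false.
Proof. by elim: k g => [|k IH] [|x g] //=; rewrite IH andbF. Qed.

Lemma nseqS_cat p (w : seq nat) : nseq p.+1 0 ++ w = nseq p 0 ++ 0 :: w.
Proof. by elim: p => //= p ->. Qed.

Lemma add_nseq_cat p u v : add (nseq p 0 ++ u) (nseq p 0 ++ v) = nseq p 0 ++ add u v.
Proof. by elim: p => //= p ->. Qed.

Lemma add_nseq j : add (nseq j 0) (nseq j 0) = nseq j 0.
Proof. by elim: j => //= j ->. Qed.

Lemma add_omk n j K K' : add (omk n j K) (omk n j K') = omk n j (K + K').
Proof. by rewrite /omk add_nseq_cat /= add_nseq. Qed.

Lemma omk0 n j : j < n -> omk n j 0 = nseq n 0.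
Proof.
move=> jn; rewrite /omk -[0 :: _]/(nseq j.+1 0) -nseqD.
by case: n jn => // n jn; rewrite /= addnS subnK // -ltnS.
Qed.

Lemma lexlt_omkS n j K : j.+1 < n -> lexlt (omk n j K) (omk n j.+1 1).
Proof.
move=> jn; rewrite /omk.
have -> : n.-1 - j = (n.-1 - j.+1).+1.
  by case: n jn => // n jn /=; rewrite subnS prednK // subn_gt0 -ltnS.
by rewrite nseqS_cat lexlt_nseq_cat.
Qed.

Lemma lele_omk n j K K' : K <= K' -> lele (omk n j K) (omk n j K').
Proof.
move=> KK; rewrite /omk /lele lexlt_nseq_cat /= lexlt_Z andbF orbF.
rewrite leq_eqVlt in KK; case/orP: KK => [/eqP->|->]; last by rewrite orbT.
by rewrite eqxx.
Qed.
Lemma decomp_lt p j y g : size g = p + j.+1 -> lexlt g (nseq p 0 ++ y :: nseq j 0) ->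
  exists e r, [/\ g = nseq p 0 ++ e :: r, size r = j & e < y].
Proof.
elim: p g => [|p IH] [|x g] //=.
  case=> sg /orP[xy|/andP[_]]; last by rewrite lexlt_Z.
  by exists x, g.
rewrite addSn => -[sg] /andP[/eqP-> H].
by case: (IH g sg H) => e [r [-> sr ey]]; exists e, r.
Qed.

Lemma RB_big X inc k (I : Type) (l : seq I) (F : I -> X -> Prop) b :
  size b = k -> (forall i, List.In i l -> RB inc k (F i) b) ->
  RB inc k (fun x => exists i, List.In i l /\ F i x) (iter (size l) (add b) (nseq k 0)).
Proof.
move=> sb; elim: l => [|i l IH] H /=.
  by apply: RB_empty => x [i [[]]].
have sI : size (iter (size l) (add b) (nseq k 0)) = k.
  elim: (size l) => [|m IHm] /=; first by rewrite size_nseq.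
  by rewrite size_add // IHm.
have K := RB_union (H i (or_introl erefl)) sb (IH (fun j Hj => H j (or_intror Hj))) sI.
apply: (RB_sub K) => x [j [[<-|Hj] Fx]]; [by left | by right; exists j].
Qed.

Lemma iter_add_omk n j M K : j < n ->
  iter K (add (omk n j M)) (nseq n 0) = omk n j (K * M).
Proof.
move=> jn; elim: K => [|K IH] /=; first by rewrite omk0.
by rewrite IH add_omk mulSn.
Qed.
Definition Box n (D : {set 'I_n}) (c : prodw n) (x : prodw n) : Prop :=
  forall t, if t \in D then is_true (c t <= x t) else x t = c t.
Definition upd n (c : prodw n) (i : 'I_n) (v : nat) : prodw n :=
  fun t => if t == i then v else c t.

Lemma not_le n (x y : prodw n) : ~~ prodw_le x y -> exists i, y i < x i.
Proof. by rewrite /prodw_le negb_forall => /existsP [i]; rewrite -ltnNge; exists i. Qed.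

Lemma le_of n (x y : prodw n) : (forall i, x i <= y i) -> prodw_le x y.
Proof. by move=> H; apply/forallP. Qed.

Lemma incompC n (x y : prodw n) : incomp x y = incomp y x.
Proof. by rewrite /incomp andbC. Qed.

Lemma mem_In (T : eqType) (x : T) s : x \in s -> List.In x s.
Proof. by elim: s => //= y s IH; rewrite inE => /orP[/eqP->|/IH]; [left|right]. Qed.

Lemma In_mem (T : eqType) (x : T) s : List.In x s -> x \in s.
Proof. by elim: s => //= y s IH [->|/IH]; rewrite inE ?eqxx // => ->; rewrite orbT. Qed.

Lemma lexlt_omk n j K K' : K < K' -> lexlt (omk n j K) (omk n j K').
Proof. by move=> KK; rewrite /omk lexlt_nseq_cat /= KK. Qed.

Lemma card_le_n n (D : {set 'I_n}) : #|D| <= n.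
Proof. by rewrite -[n in _ <= n]card_ord max_card. Qed.

Lemma RB_box n m : forall (D : {set 'I_n}) c, #|D| = m.+1 ->
  RB (@incomp n) n (Box D c) (omk n m 1).
Proof.
elim: m => [|m IH] D c cD.
  move/eqP: cD; case/cards1P => i ->.
  have n0 : 0 < n by case: i => i0 i0n; apply: leq_ltn_trans i0n.
  apply: RB_intro => a Ba; exists (nseq n 0); split.
  - by rewrite size_nseq.
  - by rewrite -(omk0 (j:=0)) // lexlt_omk.
  - apply: RB_empty => x [Bx].
    rewrite /incomp => /andP[/negP nax /negP nxa].
    have eq_t : forall t, t != i -> x t = a t.
      move=> t ti; move: (Bx t) (Ba t); rewrite inE (negbTE ti) => -> ->. by [].
    case: (leqP (x i) (a i)) => xa.
      apply: nxa; apply: le_of => t; case: (eqVneq t i) => [->//|ti].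
      by rewrite eq_t.
    apply: nax; apply: le_of => t; case: (eqVneq t i) => [->|ti].
      exact: ltnW.
    by rewrite eq_t.
have mn : m.+1 < n by rewrite -cD card_le_n.
apply: RB_intro => a Ba.
set M := (\max_(t : 'I_n) a t).+1.
pose F (i : 'I_n) := fun x => exists v, List.In v (iota 0 M) /\ Box (D :\ i) (upd c i v) x.
have HF : forall i, List.In i (enum D) -> RB (@incomp n) n (F i) (omk n m M).
  move=> i /In_mem; rewrite mem_enum => iD.
  have K := @RB_big _ (@incomp n) n _ (iota 0 M) (fun v => Box (D :\ i) (upd c i v))
              (omk n m 1) (size_omk _ (ltnW mn)).
  rewrite size_iota iter_add_omk ?muln1 in K; last exact: ltnW.
  apply: K => v Hv; apply: IH.
  by move: cD; rewrite (cardsD1 i) iD add1n => -[].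
have K := @RB_big _ (@incomp n) n _ (enum D) F (omk n m M) (size_omk _ (ltnW mn)) HF.
rewrite iter_add_omk in K; last exact: ltnW.
exists (omk n m (size (enum D) * M)); split.
- exact: size_omk (ltnW mn).
- exact: lexlt_omkS.
apply: (RB_sub K) => x [Bx ax].
case/andP: ax => /not_le [i xi] _.
have iD : i \in D.
  apply/negPn/negP => iD; move: (Bx i) (Ba i); rewrite (negbTE iD) => e1 e2.
  by rewrite e1 e2 ltnn in xi.
exists i; split; first by apply: mem_In; rewrite mem_enum.
exists (x i); split.
  apply: mem_In; rewrite mem_iota add0n /M ltnS.
  apply: leq_trans (ltnW xi) _; exact: (leq_bigmax i).
move=> t; rewrite /upd !inE; case: (eqVneq t i) => [->//|ti] /=.
by move: (Bx t); case: (t \in D).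
Qed.
Definition Slab n (D : {set 'I_n}) (c : prodw n) (i : 'I_n) (h : nat) (x : prodw n) : Prop :=
  Box D c x /\ x i < c i + h.

Lemma lt_not_le n (x y : prodw n) t : y t < x t -> ~~ prodw_le x y.
Proof. by move=> H; rewrite /prodw_le negb_forall; apply/existsP; exists t; rewrite -ltnNge. Qed.

Lemma updE n (c : prodw n) i v t : upd c i v t = if t == i then v else c t.
Proof. by []. Qed.


Lemma move_a n (D : {set 'I_n}) c i j h M : i \in D -> j \in D -> j != i ->
  Slab D c i h.+1 (upd (upd c i (c i + h)) j (c j + M)).
Proof.
move=> iD jD ji; split.
  move=> t; rewrite !updE; case: (eqVneq t j) => [->|tj]; first by rewrite jD leq_addr.
  case: (eqVneq t i) => [->|ti]; first by rewrite iD leq_addr.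
  by case: (t \in D).
by rewrite !updE eq_sym (negbTE ji) eqxx addnS ltnS.
Qed.

Lemma move_B n (D : {set 'I_n}) c i j h M : i \in D -> j \in D -> j != i ->
  forall x, Slab D (upd c j (c j + M.+1)) i h x ->
  Slab D c i h.+1 x /\ incomp (upd (upd c i (c i + h)) j (c j + M)) x.
Proof.
move=> iD jD ji x [Bx xi]; rewrite updE eq_sym (negbTE ji) in xi.
have xj : c j + M.+1 <= x j by move: (Bx j); rewrite jD updE eqxx.
split; first split.
- move=> t; move: (Bx t); rewrite updE; case: (eqVneq t j) => [->|tj].
    by rewrite jD => H; apply: leq_trans H; rewrite leq_addr.
  by [].
- by rewrite addnS ltnS ltnW.
- apply/andP; split.
    by apply: (@lt_not_le _ _ _ i); rewrite !updE eq_sym (negbTE ji) eqxx.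
  apply: (@lt_not_le _ _ _ j); rewrite !updE eqxx.
  by apply: leq_trans xj; rewrite addnS.
Qed.
Lemma move_L n (D : {set 'I_n}) c i j l h M : i \in D -> j \in D -> j != i ->
  l \in D -> l != i -> l != j ->
  forall y, Slab (D :\ i) (upd (upd c i (c i + h)) l (c l + 1)) j M y ->
  Slab D c i h.+1 y /\ incomp (upd (upd c i (c i + h)) j (c j + M)) y.
Proof.
move=> iD jD ji lD li lj y [By yj].
rewrite !updE (negbTE ji) eq_sym (negbTE lj) in yj.
have yi : y i = c i + h.
  by move: (By i); rewrite !inE eqxx /= !updE eq_sym (negbTE li) eqxx.
have yl : c l + 1 <= y l.
  by move: (By l); rewrite !inE li lD /= !updE eqxx.
split; first split.
- move=> t; case: (eqVneq t i) => [->|ti]; first by rewrite iD yi leq_addr.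
  move: (By t); rewrite !inE ti /= !updE (negbTE ti).
  case: (eqVneq t l) => [->|tl]; first by rewrite lD => H; apply: leq_trans H; rewrite leq_addr.
  by [].
- by rewrite yi addnS ltnS.
- apply/andP; split.
    apply: (@lt_not_le _ _ _ j); rewrite !updE eqxx //.
  apply: (@lt_not_le _ _ _ l); rewrite !updE (negbTE lj) (negbTE li).
  by apply: leq_trans yl; rewrite addn1.
Qed.

Lemma move_indep n (D : {set 'I_n}) c i j l h M : i \in D -> j \in D -> j != i ->
  l \in D -> l != i -> l != j ->
  forall x y, Slab D (upd c j (c j + M.+1)) i h x ->
  Slab (D :\ i) (upd (upd c i (c i + h)) l (c l + 1)) j M y ->
  incomp x y && incomp y x.
Proof.
move=> iD jD ji lD li lj x y [Bx xi] [By yj].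
rewrite updE eq_sym (negbTE ji) in xi.
have xj : c j + M.+1 <= x j by move: (Bx j); rewrite jD updE eqxx.
rewrite !updE (negbTE ji) eq_sym (negbTE lj) in yj.
have yi : y i = c i + h.
  by move: (By i); rewrite !inE eqxx /= !updE eq_sym (negbTE li) eqxx.
have H : incomp x y.
  apply/andP; split.
    apply: (@lt_not_le _ _ _ j); apply: leq_trans xj; rewrite addnS ltnS.
    exact: ltnW.
  by apply: (@lt_not_le _ _ _ i); rewrite yi.
by rewrite H incompC H.
Qed.
Lemma add0l r : add (nseq (size r) 0) r = r.
Proof. by elim: r => //= x r ->. Qed.

Lemma lele_add2r u v w : size u = size w -> size v = size w ->
  lele u v -> lele (add u w) (add v w).
Proof.
move=> su sv /orP[/eqP->|uv]; first exact: lele_refl.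
by apply: lexlt_lele; apply: lexlt_add2r.
Qed.

Lemma lele_add2l u v w : size u = size w -> size v = size w ->
  lele u v -> lele (add w u) (add w v).
Proof. by move=> su sv uv; rewrite ![add w _]addC lele_add2r. Qed.

Lemma GE_Z X inc k (A : X -> Prop) (x0 : X) : GE inc k A (nseq k 0).
Proof. by apply: (GE_intro x0) => g _; rewrite lexlt_Z. Qed.

Lemma card_pos_pick n (D : {set 'I_n}) m : #|D| = m.+1 -> exists j, j \in D.
Proof. by move=> cD; apply/set0Pn; rewrite -card_gt0 cD. Qed.

Lemma GE_slab n m : forall h (D : {set 'I_n}) c i, #|D| = m.+2 -> i \in D ->
  GE (@incomp n) n (Slab D c i h) (omk n m h).
Proof.
elim: m => [|m' IHm] h; elim: h => [|h IHh] D c i cD iD.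
- have mn : 0 < n by apply: leq_trans (card_le_n D); rewrite cD.
  by rewrite omk0 //; apply: GE_Z c.
- have mn : 1 < n by apply: leq_trans (card_le_n D); rewrite cD.
  have [j jDi] : exists j, j \in D :\ i.
    by apply: (@card_pos_pick _ _ 0); move: cD; rewrite (cardsD1 i) iD add1n => -[].
  move: jDi; rewrite !inE => /andP[ji jD].
  apply: (GE_intro c) => g sg gl.
  have sg' : size g = n.-1 - 0 + 1 by rewrite subn0 addn1 prednK // ltnW.
  case: (decomp_lt sg' gl) => e [r [ge /size0nil sr eh]].
  subst r.
  exists (upd (upd c i (c i + h)) j (c j + 0)); split; first exact: move_a.
  have K := IHh D (upd c j (c j + 1)) i cD iD.
  have K2 : GE (@incomp n) n (Slab D (upd c j (c j + 1)) i h) g.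
    apply: (GE_le K); rewrite ge -[_ ++ [:: e]]/(omk n 0 e); apply: lele_omk.
    by rewrite -ltnS.
  by apply: (GE_sup K2) => x Hx; apply: (move_B iD jD ji Hx).
- have mn : m'.+1 < n by apply: leq_trans (card_le_n D); rewrite cD.
  by rewrite omk0 //; apply: GE_Z c.
- have mn : m'.+2 < n by apply: leq_trans (card_le_n D); rewrite cD.
  have cDi : #|D :\ i| = m'.+2 by move: cD; rewrite (cardsD1 i) iD add1n => -[].
  have [j jDi] : exists j, j \in D :\ i by apply: (@card_pos_pick _ _ m'.+1).
  have cDij : #|D :\ i :\ j| = m'.+1 by move: cDi; rewrite (cardsD1 j) jDi add1n => -[].
  have [l lDij] : exists l, l \in D :\ i :\ j by apply: (@card_pos_pick _ _ m').
  have jDi' := jDi.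
  move: jDi' lDij; rewrite !inE => /andP[ji jD] /andP[lj /andP[li lD]].
  apply: (GE_intro c) => g sg gl.
  set p := n.-1 - m'.+1.
  have pn : p + m'.+2 = n by rewrite /p; clear -mn; lia.
  have sg' : size g = p + m'.+2 by rewrite pn.
  case: (decomp_lt sg' gl) => e [r [ge sr eh]].
  case: r ge sr => [|r0 r'] // ge sr.
  set M := r0.+1.
  exists (upd (upd c i (c i + h)) j (c j + M)); split; first exact: move_a.
  have KB := IHh D (upd c j (c j + M.+1)) i cD iD.
  have KL := IHm M (D :\ i) (upd (upd c i (c i + h)) l (c l + 1)) j cDi jDi.
  have KU := GE_union KB (size_omk _ (ltnW mn)) KL (size_omk _ (ltnW (ltnW mn)))
     (move_indep iD jD ji lD li lj).
  set low := nseq p 0 ++ 0 :: r0 :: r'.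
  have slow : size low = n by rewrite /low size_cat size_nseq /= -pn; case: sr => ->.
  have gE : g = add (omk n m'.+1 e) low.
    by rewrite ge /omk -/p /low add_nseq_cat /= addn0 add0n; case: sr => <-; rewrite add0l.
  have lowlt : lexlt low (omk n m' M).
    rewrite /omk /low.
    have -> : n.-1 - m' = p.+1 by rewrite /p; clear -mn; lia.
    by rewrite nseqS_cat lexlt_nseq_cat /= ltnSn.
  have K2 : GE (@incomp n) n
      (fun x => Slab D (upd c j (c j + M.+1)) i h x \/
                Slab (D :\ i) (upd (upd c i (c i + h)) l (c l + 1)) j M x) g.
    apply: (GE_le KU); rewrite gE.
    have m1n : m'.+1 < n := ltnW mn.
    have m0n : m' < n := ltnW m1n.
    apply: (@lele_trans _ (add (omk n m'.+1 h) low)).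
      apply: lele_add2r; rewrite ?(size_omk _ m1n) ?slow //.
      by apply: lele_omk; rewrite -ltnS.
    apply: lele_add2l; rewrite ?(size_omk _ m1n) ?(size_omk _ m0n) ?slow //.
    exact: lexlt_lele.
  apply: (GE_sup K2) => x [Hx|Hx].
    exact: (move_B iD jD ji Hx).
  exact: (move_L iD jD ji lD li lj Hx).
Qed.
Lemma RB_whole n : 0 < n -> RB (@incomp n) n (fun _ => True) (omk n n.-1 1).
Proof.
move=> n0.
have K := @RB_box n n.-1 [set: 'I_n] (fun _ => 0).
rewrite cardsT card_ord prednK // in K.
apply: (RB_sub (K erefl)) => x _ t; by rewrite inE.
Qed.

Lemma GE_whole n : 0 < n -> GE (@incomp n) n (fun _ => True) (omk n n.-1 1).
Proof.
move=> n0; apply: (GE_intro (fun _ => 0)) => g sg gl.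
case: n n0 sg gl => // [[|m]] _ sg gl.
  have sg' : size g = 0 + 1 by [].
  case: (decomp_lt sg' gl) => e [r [ge /size0nil sr]]; subst r.
  rewrite ltnS leqn0 => /eqP e0; subst e.
  exists (fun _ => 0); split => //.
  rewrite ge /=; exact: (@GE_Z _ _ 1 _ (fun _ => 0)).
have sg' : size g = 0 + m.+2 by [].
rewrite /omk subnn -[nseq 0 0 ++ _]/(nseq 0 0 ++ _) in gl.
case: (decomp_lt sg' gl) => e [r [ge sr]].
rewrite ltnS leqn0 => /eqP e0; subst e.
case: r ge sr => [|r0 r] // ge [sr].
pose i : 'I_m.+2 := ord0. pose j : 'I_m.+2 := ord_max.
have ji : j != i by [].
exists (upd (fun _ => 0) j r0.+1); split => //.
have K := @GE_slab m.+2 m r0.+1 [set: 'I_m.+2] (upd (fun _ => 0) i 1) j.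
rewrite cardsT card_ord inE in K.
have gl2 : lele g (omk m.+2 m r0.+1).
  rewrite ge /omk /= subSnn /=; apply: lexlt_lele => /=.
  by rewrite ltnSn.
have K2 := GE_le (K erefl erefl) gl2.
apply: (GE_sup K2) => x [Bx xj]; split => //.
have xi : 1 <= x i by move: (Bx i); rewrite inE.
rewrite updE (negbTE ji) add0n in xj.
apply/andP; split.
  apply: (@lt_not_le _ _ _ j); by rewrite updE eqxx.
apply: (@lt_not_le _ _ _ i); by rewrite updE eq_sym (negbTE ji).
Qed.
Definition Cs n (s : seq (prodw n)) : prodw n -> Prop :=
  fun x => all (fun b => incomp b x) s.

Lemma Cs_rcons n (s : seq (prodw n)) a x : Cs (rcons s a) x <-> Cs s x /\ incomp a x.
Proof. by rewrite /Cs all_rcons andbC; split => [/andP[]|[-> ->]]. Qed.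

Lemma ole_big s y : size s < size y -> ole s y.
Proof. by move=> H; rewrite /ole /olt H orbT. Qed.

Lemma cv_E n : 0 < n -> cv (omk n n.-1 1) = opow_omega n.-1.
Proof.
move=> n0; rewrite /omk subnn /= /cv /= rev_cons rev_nseq.
by rewrite /opow_omega.
Qed.

Theorem mainTheorem6 (n : nat) : 1 <= n -> width_is n (opow_omega n.-1).
Proof.
move=> n0.
set E := omk n n.-1 1.
have sE : size E = n by rewrite size_omk // prednK.
have HRB := RB_whole n0.
have Hmin : forall s : seq (prodw n), exists m, [/\ size m = n, RB (@incomp n) n (Cs s) m &
    forall v, size v = n -> RB (@incomp n) n (Cs s) v -> lele m v].
  move=> s; apply: lex_min; exists E; split => //.
  exact: (RB_sub HRB).
case: (@choice_fun _ _ [::] (fun _ => True) _ (fun s _ => Hmin s)) => rho Hrho.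
have Hr : forall s, [/\ size (rho s) = n, RB (@incomp n) n (Cs s) (rho s) &
    forall v, size v = n -> RB (@incomp n) n (Cs s) v -> lele (rho s) v].
  by move=> s; apply: Hrho.
have rne : forall s, rho s != [::].
  by move=> s; case: (Hr s) => sr _ _; apply/eqP => e; move: sr; rewrite e => e0; rewrite -e0 in n0.
have key : forall s v, size v = n -> ole (osucc (cv (rho s))) (cv v) = lexlt (rho s) v.
  move=> s v sv; case: (Hr s) => sr _ _.
  by rewrite osucc_cv // ole_cv ?size_incl ?sr // lele_incl ?sr.
have ole_rho : forall s y, ocanon y -> n < size y -> ole (cv (rho s)) y.
  move=> s y _ sy; apply: ole_big; apply: leq_ltn_trans sy.
  by case: (Hr s) => sr _ _; apply: leq_trans (size_cv _) _; rewrite sr.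
exists (fun s => cv (rho s)); split.
- move=> s [sne spw]; split.
  + exact: cv_canon.
  + move=> o [t [[tne tpw] [a et] ->]]; subst t.
    case: (Hr s) => srs RBs mins.
    rewrite key //.
    have aC : Cs s a by move: tpw; rewrite pairwise_rcons => /andP[].
    case: (RB_elim RBs aC) => g [sg gs RBg].
    case: (Hr (rcons s a)) => _ _ mint.
    have : lele (rho (rcons s a)) g.
      apply: mint => //; apply: (RB_sub RBg) => x /Cs_rcons.
      by [].
    by move=> H; apply: lele_lt_trans H gs.
  + move=> y cy ub.
    case: (leqP (size y) n) => sy; last exact: ole_rho.
    case: (cv_pad cy sy) => su ey; rewrite -ey.
    set u := nseq _ _ ++ _ in su ey *.
    case: (Hr s) => srs RBs mins.
    rewrite ole_cv ?srs //; apply: mins => //.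
    apply: RB_intro => a aC.
    have tnode : antichain_node (rcons s a).
      split; first by case: (s).
      by rewrite pairwise_rcons spw andbT.
    have := ub _ (ex_intro _ (rcons s a) (And3 tnode (ex_intro _ a erefl) erefl)).
    rewrite -ey key // => lt.
    case: (Hr (rcons s a)) => srt RBt _.
    exists (rho (rcons s a)); split => //.
    by apply: (RB_sub RBt) => x [Cx ax]; apply/Cs_rcons.
- rewrite -(cv_E n0) -/E; split.
  + exact: cv_canon.
  + move=> o [s [[sne spw] ->]].
    rewrite key //.
    case: s sne spw => [|a s'] // _ spw.
    case: (RB_elim HRB (I : (fun _ : prodw n => True) a)) => g [sg gE RBg].
    case: (Hr (a :: s')) => _ _ mins.
    have : lele (rho (a :: s')) g.
      apply: mins => //; apply: (RB_sub RBg) => x Cx; split => //.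
      by move: Cx; rewrite /Cs /= => /andP[].
    by move=> H; apply: lele_lt_trans H gE.
  + move=> y cy ub.
    case: (leqP (size y) n) => sy; last by apply: ole_big; apply: leq_ltn_trans sy; apply: leq_trans (size_cv _) _; rewrite sE.
    case: (cv_pad cy sy) => su ey; rewrite -ey.
    set u := nseq _ _ ++ _ in su ey *.
    rewrite ole_cv ?sE //; apply: not_lt_lele; first by rewrite sE su.
    apply/negP => uE.
    case: (GE_elim (GE_whole n0) su uE) => a [_ GEa].
    have GEs : GE (@incomp n) n (Cs [:: a]) u.
      by apply: (GE_sup GEa) => x [_ ax]; rewrite /Cs /= ax.
    case: (Hr [:: a]) => sra RBa _.
    have := GE_RB GEs RBa sra.
    have snode : antichain_node [:: a] by split.
    have := ub _ (ex_intro _ [:: a] (conj snode erefl)).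
    by rewrite -ey key // => ->.
Qed.
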